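(* Let $X$ be a Tychonoff regular locally Menger $p$-space and let $Y=bX\setminus X$ be a remainder of $X$ in some compactification $bX$. Then there is a compact subspace $K$ of $Y$ such that every closed subset $F$ of $Y$ with $F\cap K=\emptyset$ is a Lindelöf $p$-space (and hence every such $F$ is an $s$-space).
   Context: A space $X$ is Menger if for each sequence $(\mathcal{U}_n)$ of open covers of $X$ there is a sequence $(\mathcal{V}_n)$ with each $\mathcal{V}_n$ a finite subset of $\mathcal{U}_n$ and $\bigcup_{n}\bigcup\mathcal{V}_n=X$. A space $X$ is locally Menger if for each $x\in X$ there exist an open set $U$ and a Menger subspace $Y$ of $X$ with $x\in U\subseteq Y$. A Tychonoff space $X$ is a $p$-space if in some (equivalently, any) compactification $bX$ there is a countable family $\{\mathcal{U}_n:n\in\mathbb{N}\}$, each $\mathcal{U}_n$ a collection of open subsets of $bX$, such that for each $x\in X$, $x\in\bigcap_{n}\bigcup\{U\in\mathcal{U}_n:x\in U\}\subseteq X$. For a family $\mathcal{C}$ of subsets of $Z$, $\mathcal{C}_\delta$ is the family of intersections of nonempty subfamilies of $\mathcal{C}$ and $\mathcal{C}_{\delta,\sigma}$ the family of unions of subfamilies of $\mathcal{C}_\delta$; $\mathcal{C}$ is a source for $Y\subseteq Z$ if $Y\in\mathcal{C}_{\delta,\sigma}$. A Tychonoff space $X$ is an $s$-space if there is a countable source for $X$ in some (equivalently, any) compactification $bX$ consisting of open subsets of $bX$. *)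

(* Defs.v *)
(* A Tychonoff space X with a compactification bX is
   modelled as a dense subset X of a compact Hausdorff space T (= bX).
   All notions below are for subspaces A of T, formulated with the subspace
   topology (open sets of A are traces V `&` A of open sets V of T). *)
From HB Require Import structures.
From mathcomp Require Import all_boot all_order all_algebra.
From mathcomp Require Import all_classical all_reals all_analysis.
Set Implicit Arguments. Unset Strict Implicit. Unset Printing Implicit Defensive.
Local Open Scope classical_set_scope.

Section Defs.
Context {T : topologicalType}.

Definition rel_open (A W : set T) := exists V : set T, open V /\ W = V `&` A.

Definition rel_closed (A F : set T) := exists C : set T, closed C /\ F = C `&` A.

Definition open_cover_of (A : set T) (U : set (set T)) :=
  (forall W, U W -> rel_open A W) /\ A `<=` \bigcup_(W in U) W.

Definition menger (A : set T) :=
  forall u : nat -> set (set T), (forall n, open_cover_of A (u n)) ->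
  exists v : nat -> set (set T),
    (forall n, v n `<=` u n /\ finite_set (v n)) /\
    A `<=` \bigcup_n \bigcup_(W in v n) W.

Definition lindelof (A : set T) :=
  forall U : set (set T), open_cover_of A U ->
  exists V : set (set T), V `<=` U /\ countable V /\ A `<=` \bigcup_(W in V) W.

Definition locally_menger (A : set T) :=
  forall x, A x -> exists U M : set T,
    rel_open A U /\ M `<=` A /\ menger M /\ U x /\ U `<=` M.

(* p-space, tested in the compactification closure A of A (T compact Hausdorff):
   a countable family (U_n) of collections of open subsets of closure A with
   x \in \bigcap_n St(x, U_n) \subseteq A for every x in A. *)
Definition p_space (A : set T) :=
  exists U : nat -> set (set T),
    (forall n W, U n W -> rel_open (closure A) W) /\
    forall x, A x ->
      x \in \bigcap_n \bigcup_(W in [set W | U n W /\ W x]) W /\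
      \bigcap_n \bigcup_(W in [set W | U n W /\ W x]) W `<=` A.

(* s-space, tested in the compactification closure A: a countable family C of
   open subsets of closure A such that A is a union of intersections of
   nonempty subfamilies of C. *)
Definition s_space (A : set T) :=
  exists C : set (set T),
    countable C /\ (forall W, C W -> rel_open (closure A) W) /\
    exists D : set (set (set T)),
      (forall S, D S -> S `<=` C /\ S !=set0) /\
      A = \bigcup_(S in D) \bigcap_(W in S) W.

End Defs.

(* Main.v *)
Require Import Defs.
From HB Require Import structures.
From mathcomp Require Import all_boot all_order all_algebra.
From mathcomp Require Import all_classical all_reals all_analysis.
Set Implicit Arguments. Unset Strict Implicit. Unset Printing Implicit Defensive.
Local Open Scope classical_set_scope.

Module PTaux.
Section PT.
Variables (T : topologicalType) (x0 : T).
Definition pT : Type := T.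
HB.instance Definition _ := Topological.on pT.
HB.instance Definition _ := isPointed.Build pT x0.
Lemma cc_aux (A : set T) : compact A -> cover_compact A.
Proof. move=> cA; have H := @compact_cover pT. have E := congr1 (fun P => P A) H. simpl in E.
exact: (eq_ind _ (fun P : Prop => P) cA _ E). Qed.
End PT.
Import finmap.
Lemma fin_cover (T : topologicalType) (A : set T) : compact A ->
  forall (I : choiceType) (D : set I) (f : I -> set T),
  (forall i, D i -> open (f i)) -> A `<=` \bigcup_(i in D) f i ->
  exists D' : set I, D' `<=` D /\ finite_set D' /\ A `<=` \bigcup_(i in D') f i.
Proof.
move=> cA I D f fo Af.
have [[a Aa]|A0] := pselect (A !=set0); last first.
  exists set0; split => //; split => // x Ax; exfalso; apply: A0; by exists x.
have [D' D'D AD'] := cc_aux a cA fo Af.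
exists [set` D']; split; first by move=> i iD; have := D'D i iD; rewrite in_setE.
split; first exact: finite_fset.
exact: AD'.
Qed.

Lemma fip_nat (T : topologicalType) (K : nat -> set T) : compact [set: T] ->
  (forall i, closed (K i)) -> (forall n, exists x, forall i, (i < n)%N -> K i x) ->
  exists x, forall i, K i x.
Proof.
move=> cT Kc Kn; apply: contrapT => nK.
have cov : [set: T] `<=` \bigcup_(i in [set: nat]) (~` K i).
  move=> x _; apply: contrapT => nx; apply: nK; exists x => i.
  by apply: contrapT => nKi; apply: nx; exists i.
have oK : forall i, [set: nat] i -> open (~` K i) by move=> i _; rewrite openC.
have [D' [_ [fD' cD']]] := fin_cover cT oK cov.
have [X' eX'] := finite_fsetP.1 fD'.
have [x xK] := Kn (\max_(i <- X') i).+1.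
have [i Di nKi] := cD' x I.
apply: nKi; apply: xK; rewrite ltnS.
have : [set` X'] i by rewrite -eX'.
move=> /= iX; by apply: leq_bigmax_seq.
Qed.
End PTaux.

Import PTaux.

Section Aux.
Context {T : topologicalType}.
Hypothesis cT : compact [set: T].
Hypothesis hT : hausdorff_space T.

Lemma reg_open (x : T) (W : set T) : open W -> W x ->
  exists W', open W' /\ W' x /\ closure W' `<=` W.
Proof.
move=> oW Wx.
have R := compact_regular hT cT (@filterT _ (nbhs x) (nbhs_filter x)).
have nW : nbhs x W by apply: open_nbhs_nbhs; split.
have [N nN cN] := R W nW.
exists N°; split; first exact: open_interior.
split; first exact: nbhs_singleton (nbhs_interior nN).
apply: subset_trans cN; apply: closureS; exact: interior_subset.
Qed.

Lemma closed_compact (A : set T) : closed A -> compact A.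
Proof. by move=> cA; rewrite -[A]setTI; apply: compact_closedI. Qed.

Lemma open_bigcap_lt (n : nat) (f : nat -> set T) :
  (forall i, (i < n)%N -> open (f i)) -> open (\bigcap_(i in [set i | (i < n)%N]) f i).
Proof.
elim: n => [|n IH] H.
  have -> : \bigcap_(i in [set i | (i < 0)%N]) f i = setT by apply/seteqP; split => // x _ i.
  exact: openT.
have -> : \bigcap_(i in [set i | (i < n.+1)%N]) f i =
   (\bigcap_(i in [set i | (i < n)%N]) f i) `&` f n.
  apply/seteqP; split => x /=.
    move=> H1; split; first by move=> i /= lt; apply: H1 => /=; apply: ltnW.
    by apply: H1 => /=.
  move=> [H1 H2] i /=; rewrite ltnS leq_eqVlt => /orP [/eqP -> //|lt].
  exact: H1.
apply: openI; first by apply: IH => i lt; apply: H; apply: ltnW.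
exact: H.
Qed.

Definition lind (A : set T) := forall G : set (set T), (forall W, G W -> open W) ->
  A `<=` \bigcup_(W in G) W ->
  exists G', G' `<=` G /\ countable G' /\ A `<=` \bigcup_(W in G') W.

Lemma lind_bigcup (I : Type) (D : set I) (A : I -> set T) :
  countable D -> (forall i, D i -> lind (A i)) -> lind (\bigcup_(i in D) A i).
Proof.
move=> cD lA G oG cov.
have : forall i, exists G', D i -> G' `<=` G /\ countable G' /\ A i `<=` \bigcup_(W in G') W.
  move=> i; have [Di|nDi] := pselect (D i); last by exists set0.
  have [G' H] := lA i Di G oG (fun x Ax => cov x (ex_intro2 _ _ i Di Ax)).
  by exists G'.
move=> /boolp.choice [g Hg].
exists (\bigcup_(i in D) g i); split.
  by move=> W [i Di giW]; have [+ _] := Hg i Di; apply.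
split; first by apply: bigcup_countable => // i Di; have [_ []] := Hg i Di.
move=> x [i Di Aix]; have [_ [_ H]] := Hg i Di; have [W gW Wx] := H x Aix.
by exists W => //; exists i.
Qed.

End Aux.

Section Key.
Context {T : topologicalType}.
Hypothesis cT : compact [set: T].
Hypothesis hT : hausdorff_space T.
Variables (X : set T) (U : nat -> set (set T)).
Hypothesis Uo : forall n W, U n W -> open W.
Hypothesis Ucov : forall x, X x -> forall n, exists W, U n W /\ W x.
Hypothesis Usep : forall x z, X x -> (forall n, exists W, U n W /\ W x /\ W z) -> X z.

Lemma key (C : set T) : compact C -> C `<=` X ->
  exists H : nat -> set T, (forall n, open (H n)) /\ (forall n, C `<=` H n) /\
    (forall z, (forall n, H n z) -> X z).
Proof.
move=> cC CX.
have : forall i, exists f : T -> set T * set T, forall x, C x ->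
   U i (f x).1 /\ open (f x).2 /\ (f x).2 x /\ closure (f x).2 `<=` (f x).1.
  move=> i.
  suff HH : forall x, exists p : set T * set T, C x -> U i p.1 /\ open p.2 /\ p.2 x /\ closure p.2 `<=` p.1.
    by have [g Hg] := boolp.choice HH; exists g.
  move=> x.
  have [Cx|nCx] := pselect (C x); last by exists (setT, setT).
  have [W [UW Wx]] := Ucov (CX x Cx) i.
  have [W' [oW' [W'x cW']]] := reg_open cT hT (Uo UW) Wx.
  by exists (W, W').
move=> /boolp.choice [f Hf].
have : forall i, exists G', G' `<=` [set (f i x).2 | x in C] /\ finite_set G' /\
    C `<=` \bigcup_(W in G') W.
  move=> i.
  have oG : forall W, [set (f i x).2 | x in C] W -> open (id W).
    by move=> W [x Cx <-]; have [_ []] := Hf i x Cx.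
  have cov : C `<=` \bigcup_(W in [set (f i x).2 | x in C]) id W.
    move=> x Cx; exists (f i x).2; first by exists x.
    by have [_ [_ []]] := Hf i x Cx.
  exact: fin_cover cC _ _ _ oG cov.
move=> /boolp.choice [G HG].
pose S n := [set s : nat -> set T | (forall i, (i < n)%N -> G i (s i)) /\
   exists c, C c /\ forall i, (i < n)%N -> closure (s i) c].
exists (fun n => \bigcup_(s in S n) \bigcap_(i in [set i | (i < n)%N]) s i).
split.
  move=> n; apply: bigcup_open => s [Ss _]; apply: open_bigcap_lt => i lt.
  have [+ _] := HG i; move=> /(_ _ (Ss i lt)) [x Cx <-].
  by have [_ []] := Hf i x Cx.
split.
  move=> n c Cc.
  have : forall i, exists W, G i W /\ W c.
    move=> i; have [_ [_ cov]] := HG i; have [W GW Wc] := cov c Cc.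
    by exists W.
  move=> /boolp.choice [s Hs]; exists s.
    split; first by move=> i _; have [] := Hs i.
    exists c; split => // i _; apply: subset_closure; by have [] := Hs i.
  by move=> i _; have [] := Hs i.
move=> z Hz.
pose K i := C `&` \bigcup_(W in [set W | G i W /\ W z]) closure W.
have Kc : forall i, closed (K i).
  move=> i; apply: closedI; first exact: compact_closed.
  apply: closed_bigcup; last by move=> W _; exact: closed_closure.
  have [_ [fG _]] := HG i; apply: sub_finite_set fG; by move=> W [].
have Kn : forall n, exists x, forall i, (i < n)%N -> K i x.
  move=> n; have [s [Gs [c [Cc cs]]] szi] := Hz n.
  exists c => i lt; split; first exact: Cc.
  exists (s i); last exact: cs.
  split; first exact: Gs.
  exact: szi.
have [c Hc] := fip_nat cT Kc Kn.
have Cc : C c by have [] := Hc 0.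
apply: (Usep (CX c Cc)) => i.
have [_ [W [GW Wz] cWc]] := Hc i.
have [+ _] := HG i; move=> /(_ _ GW) [x Cx eW].
have [Uf [_ [_ cf]]] := Hf i x Cx.
exists (f i x).1; split => //; split; first by apply: cf; rewrite eW.
by apply: cf; apply: subset_closure; rewrite eW.
Qed.

Lemma Ylind (G : set (set T)) : (forall W, G W -> open W) ->
  ~` X `<=` \bigcup_(W in G) W ->
  exists G', G' `<=` G /\ countable G' /\ ~` X `<=` \bigcup_(W in G') W.
Proof.
move=> oG cov.
have cC : compact (~` \bigcup_(W in G) W).
  apply: (closed_compact cT); rewrite closedC; exact: bigcup_open.
have CX : ~` (\bigcup_(W in G) W) `<=` X.
  by move=> x nx; apply: contrapT => nX; apply: nx; apply: cov.
have [H [oH [CH HX]]] := key cC CX.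
have : forall n, exists G', G' `<=` G /\ finite_set G' /\ ~` H n `<=` \bigcup_(W in G') W.
  move=> n.
  have cov' : ~` H n `<=` \bigcup_(W in G) id W.
    by move=> x nH; apply: contrapT => nx; apply: nH; apply: CH.
  have oG' : forall W, G W -> open (id W) by [].
  apply: (fin_cover (closed_compact cT _) oG' cov'); by rewrite closedC.
move=> /boolp.choice [J HJ].
exists (\bigcup_(n in [set: nat]) J n); split.
  by move=> W [n _ JW]; have [+ _] := HJ n; apply.
split.
  apply: bigcup_countable => // n _; apply: finite_set_countable.
  by have [_ []] := HJ n.
move=> y ny.
have [n nH] : exists n, ~ H n y.
  apply: contrapT => nn; apply: ny; apply: HX => n.
  by apply: contrapT => nh; apply: nn; exists n.
have [_ [_ cJ]] := HJ n; have [W JW Wy] := cJ y nH.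
by exists W => //; exists n.
Qed.
End Key.

Lemma menger_lind {T : topologicalType} (M D : set T) : menger M -> closed D -> lind (D `&` M).
Proof.
move=> mM cD G oG cov.
pose u (n : nat) := [set S | (exists W, G W /\ S = W `&` M) \/ S = ~` D `&` M].
have ou : forall n, open_cover_of M (u n).
  move=> n; split.
    move=> S [[W [GW ->]]|->]; first by exists W; split => //; exact: oG.
    by exists (~` D); split => //; rewrite openC.
  move=> m Mm; have [Dm|nDm] := pselect (D m).
    have [W GW Wm] := cov m (conj Dm Mm).
    by exists (W `&` M) => //; left; exists W.
  by exists (~` D `&` M) => //; right.
have [v [vu vM]] := mM u ou.
pose pre S := xget setT [set W | G W /\ S = W `&` M].
exists (pre @` [set S | (exists n, v n S) /\ exists W, G W /\ S = W `&` M]); split.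
  move=> _ [S [_ HS] <-]; by have [] := xgetPex setT HS.
split.
  apply: sub_countable (card_image_le _ _) _.
  apply: sub_countable (subset_card_le (B := \bigcup_(n in [set: nat]) v n) _) _.
    by move=> S [[n vS] _]; exists n.
  apply: bigcup_countable => // n _; apply: finite_set_countable; by have [] := vu n.
move=> y [Dy My]; have [n _ [S vS Sy]] := vM y My.
have [+ _] := vu n; move=> /(_ S vS) [HS|eS]; last by move: Sy; rewrite eS => -[].
have [GW eW] := xgetPex setT HS.
exists (pre S); first by exists S => //; split => //; exists n.
by have := Sy; rewrite {1}eW; case.
Qed.

Section Main.
Context {T : topologicalType}.
Hypothesis cT : compact [set: T].
Hypothesis hT : hausdorff_space T.
Variables (X : set T).

Lemma F_lindelof (D0 : set T) : closed D0 ->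
  (forall G : set (set T), (forall W, G W -> open W) ->
  ~` X `<=` \bigcup_(W in G) W ->
  exists G', G' `<=` G /\ countable G' /\ ~` X `<=` \bigcup_(W in G') W) ->
  lindelof (D0 `&` ~` X).
Proof.
move=> cD0 YL U' [rU covU].
have : forall W, exists V, U' W -> open V /\ W = V `&` (D0 `&` ~` X).
  move=> W; have [UW|nUW] := pselect (U' W); last by exists setT.
  have [V [oV eW]] := rU W UW; by exists V.
move=> /boolp.choice [fV HfV].
pose G := [set V | exists W, U' W /\ V = fV W] `|` [set ~` D0].
have oG : forall V, G V -> open V.
  move=> V [[W [UW ->]]|->]; first by have [] := HfV W UW.
  by rewrite openC.
have cov : ~` X `<=` \bigcup_(V in G) V.
  move=> y ny; have [Dy|nDy] := pselect (D0 y); last by exists (~` D0) => //; right.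
  have [W UW Wy] := covU y (conj Dy ny).
  exists (fV W); first by left; exists W.
  have [_ eW] := HfV W UW; by move: Wy; rewrite {1}eW => -[].
have [G' [G'G [cG' covG']]] := YL G oG cov.
exists [set W | U' W /\ G' (fV W)]; split; first by move=> W [].
split.
  have [f finj] := countable_injP _ cG'.
  apply/countable_injP; exists (fun W => f (fV W)) => W1 W2.
  rewrite !in_setE => -[U1 G1] [U2 G2] /finj.
  rewrite !in_setE => /(_ G1 G2) e12.
  by have [_ ->] := HfV W1 U1; have [_ ->] := HfV W2 U2; rewrite e12.
move=> y [Dy ny]; have [V G'V Vy] := covG' y ny.
have [[W [UW eV]]|eV] := G'G V G'V; last by move: Vy; rewrite eV.
exists W; first by split => //; rewrite -eV.
by have [_ ->] := HfV W UW; split => //; rewrite -eV.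
Qed.
End Main.

Section PS.
Context {T : topologicalType}.
Hypothesis cT : compact [set: T].
Hypothesis hT : hausdorff_space T.
Variables (X : set T) (U : nat -> set (set T)).
Hypothesis Uo : forall n W, U n W -> open W.
Hypothesis Ucov : forall x, X x -> forall n, exists W, U n W /\ W x.
Hypothesis Usep : forall x z, X x -> (forall n, exists W, U n W /\ W x /\ W z) -> X z.
Variables (D0 : set T) (O' : set (set T)).
Hypothesis cD0 : closed D0.
Hypothesis cO' : countable O'.
Hypothesis oO' : forall O, O' O -> open O.
Hypothesis gO' : forall O, O' O -> O = ~` D0 \/ lind (closure O `&` X).
Hypothesis covO' : D0 `&` ~` X `<=` \bigcup_(O in O') O.

Let F := D0 `&` ~` X.

Lemma F_ps : p_space F /\ s_space F.
Proof.
have clFD : closure F `<=` D0.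
  rewrite (closure_id D0).1 //; apply: closureS; by move=> y [].
pose Z := \bigcup_(O in [set O | O' O /\ lind (closure O `&` X)]) (closure O `&` X).
have lZ : lind Z.
  apply: lind_bigcup; last by move=> O [].
  by apply: sub_countable cO'; apply: subset_card_le => O [].
pose Q n := [set W' | open W' /\ exists W, U n W /\ closure W' `<=` W].
have : forall n, exists Q', Q' `<=` Q n /\ countable Q' /\ Z `<=` \bigcup_(W in Q') W.
  move=> n; apply: lZ; first by move=> W [].
  move=> z [B _ [_ Xz]]; have [W [UW Wz]] := Ucov Xz n.
  have [W' [oW' [W'z cW']]] := reg_open cT hT (Uo UW) Wz.
  by exists W' => //; split => //; exists W.
move=> /boolp.choice [Q' HQ'].
have : forall n, exists e : nat -> set T, forall W, Q' n W -> exists k, e k = W.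
  move=> n; have [_ [cQ _]] := HQ' n; have [f finj] := countable_injP _ cQ.
  exists (fun k => xget set0 [set W | Q' n W /\ f W = k]) => W QW.
  exists (f W); have [Q0 f0] := xgetPex set0 (ex_intro _ W (conj QW erefl) : exists W0, Q' n W0 /\ f W0 = f W).
  by apply: finj => //; rewrite in_setE.
move=> /boolp.choice [e He].
pose pw n W' := xget setT [set W | U n W /\ closure W' `<=` W].
have pwP : forall n W', closure W' `<=` pw n W' /\ open (pw n W') /\
    ((exists W, U n W /\ closure W' `<=` W) -> U n (pw n W')).
  move=> n W'; rewrite /pw.
  have [ex|nex] := pselect (exists W, U n W /\ closure W' `<=` W).
    have [UW cW] := xgetPex setT ex.
    split; first exact: cW.
    by split; [exact: Uo UW|].
  rewrite xgetPN; last by move=> W HW; apply: nex; exists W.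
  split; first by [].
  by split; [exact: openT|move=> [W HW]; exfalso; apply: nex; exists W].
pose fam (nk : nat * nat) := [set pw nk.1 (e nk.1 nk.2) `&` closure F] `|`
   [set ~` closure (e nk.1 nk.2) `&` closure F].
pose V (m : nat) := match m with
   | 0 => (fun O => O `&` closure F) @` O'
   | m'.+1 => fam (odflt (0, 0) (unpickle m' : option (nat * nat))) end.
have P1 : forall m S, V m S -> rel_open (closure F) S.
  case => [|m] S /=.
    by move=> [B O'O <-]; exists B; split => //; exact: oO'.
  set nk := odflt _ _.
  move=> [->|->]; first by exists (pw nk.1 (e nk.1 nk.2)); split => //; have [_ []] := pwP nk.1 (e nk.1 nk.2).
  by exists (~` closure (e nk.1 nk.2)); split => //; rewrite openC; exact: closed_closure.
have P2 : forall y, F y -> forall m, exists S, V m S /\ S y.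
  move=> y Fy [|m] /=.
    have [B O'O Oy] := covO' Fy.
    by exists (B `&` closure F); split; [exists B|split => //; exact: subset_closure].
  set nk := odflt _ _.
  have [cy|ncy] := pselect (closure (e nk.1 nk.2) y).
    exists (pw nk.1 (e nk.1 nk.2) `&` closure F); split; first by left.
    split; last exact: subset_closure.
    by have [+ _] := pwP nk.1 (e nk.1 nk.2); apply.
  exists (~` closure (e nk.1 nk.2) `&` closure F); split; first by right.
  by split => //; exact: subset_closure.
have P3 : forall y z, F y -> (forall m, exists S, V m S /\ S y /\ S z) -> F z.
  move=> y z Fy H; apply: contrapT => nFz.
  have [S [[B O'O eS] [Sy Sz]]] := H 0.
  move: Sy Sz; rewrite -eS => -[Oy _] [Oz clz].
  have Dz := clFD z clz.
  have Xz : X z by apply: contrapT => nXz; apply: nFz; by split.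
  have [eO|lO] := gO' O'O; first by move: Oz; rewrite eO.
  have Zz : Z z by exists B => //; split => //; exact: subset_closure.
  have [n nsep] : exists n, forall W, U n W -> W z -> ~ W y.
    apply: contrapT => nn; have [_ ny] := Fy; apply: ny; apply: (Usep Xz) => n.
    apply: contrapT => nW; apply: nn; exists n => W UW Wz Wy; apply: nW.
    by exists W.
  have [Qsub [_ cZ]] := HQ' n; have [W' QW' W'z] := cZ z Zz.
  have [k ek] := He n W' QW'.
  have [S' [HS' [S'y S'z]]] := H (pickle (n, k)).+1.
  move: HS'; rewrite /V /= pickleK /= /fam /= ek => -[eS'|eS'].
    move: S'y S'z; rewrite eS' => -[pwy _] [pwz _].
    have [cpw [_ Upw]] := pwP n W'.
    have [_ [W [UW cW]]] := Qsub W' QW'.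
    apply: (nsep _ (Upw (ex_intro _ W (conj UW cW)))) pwy.
    by apply: cpw; apply: subset_closure.
  by move: S'z; rewrite eS' => -[+ _]; apply; apply: subset_closure.
have P4 : forall m, countable (V m).
  case => [|m] /=; first exact: sub_countable (card_image_le _ _) cO'.
  apply: finite_set_countable; rewrite /fam; rewrite finite_setU; split; exact: finite_set1.
split.
  exists V; split; first exact: P1.
  move=> x Fx; split.
    apply/mem_set => n _; have [S [VS Sx]] := P2 x Fx n.
    by exists S.
  move=> z Hz. apply: (P3 _ _ Fx) => m; have [S [VS Sx] Sz] := Hz m I.
  by exists S.
exists (\bigcup_(m in [set: nat]) V m); split.
  by apply: bigcup_countable => // m _; exact: P4.
split; first by move=> W [m _ VW]; exact: P1 VW.
exists [set S | exists y, F y /\ exists f : nat -> set T, (forall m, V m (f m) /\ f m y) /\ S = range f].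
split.
  move=> S [y [Fy [f [Hf ->]]]]; split; last by exists (f 0); exists 0.
  by move=> _ [m _ <-]; exists m => //; have [] := Hf m.
apply/seteqP; split.
  move=> y Fy.
  have /boolp.choice [f Hf] : forall m, exists S, V m S /\ S y by exact: P2 y Fy.
  exists (range f); first by exists y; split => //; exists f.
  by move=> _ [m _ <-]; have [] := Hf m.
move=> z [S [y [Fy [f [Hf ->]]]] Hz].
apply: (P3 _ _ Fy) => m; exists (f m); have [Vf fy] := Hf m; split => //; split => //.
by apply: Hz; exists m.
Qed.
End PS.

Theorem theorem5p1 (T : topologicalType) (X : set T) :
  compact [set: T] -> hausdorff_space T -> closure X = [set: T] ->
  locally_menger X -> p_space X ->
  exists K : set T, K `<=` ~` X /\ compact K /\
    forall F : set T, F `<=` ~` X -> rel_closed (~` X) F -> F `&` K = set0 ->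
      lindelof F /\ p_space F /\ s_space F.
Proof.
move=> cT hT dX lmX [U [Uop HU]].
have Uo : forall n W, U n W -> open W.
  by move=> n W /Uop [V [oV ->]]; rewrite dX setIT.
have Ucov : forall x, X x -> forall n, exists W, U n W /\ W x.
  move=> x Xx n; have [+ _] := HU x Xx; rewrite in_setE => /(_ n I) [W [UW Wx] _].
  by exists W.
have Usep : forall x z, X x -> (forall n, exists W, U n W /\ W x /\ W z) -> X z.
  move=> x z Xx H; have [_ +] := HU x Xx; apply => n _.
  by have [W [UW [Wx Wz]]] := H n; exists W.
pose good Ob := open Ob /\ lind (closure Ob `&` X).
have goodX : forall x, X x -> exists Ob, good Ob /\ Ob x.
  move=> x Xx; have [U0 [M [[V [oV eU]] [MX [mM [U0x UM]]]]]] := lmX x Xx.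
  have Vx : V x by move: U0x; rewrite eU => -[].
  have [Ob [oO [Ox cO]]] := reg_open cT hT oV Vx.
  exists Ob; split => //; split => //.
  have -> : closure Ob `&` X = closure Ob `&` M.
    apply/seteqP; split => y [cy Xy]; split => //; last exact: MX.
    by apply: UM; rewrite eU; split => //; exact: cO.
  by apply: menger_lind mM _; exact: closed_closure.
exists (~` \bigcup_(Ob in good) Ob); split.
  move=> x nO Xx; have [Ob [gO Ox]] := goodX x Xx; apply: nO; by exists Ob.
split.
  apply: (closed_compact cT); rewrite closedC; apply: bigcup_open => Ob [].
  by [].
move=> F FX [D0 [cD0 eF]] FK.
have FO : F `<=` \bigcup_(Ob in good) Ob.
  move=> y Fy; apply: contrapT => ny.
  have : (F `&` ~` \bigcup_(Ob in good) Ob) y by split.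
  by rewrite FK.
rewrite eF in FO *.
have YL := Ylind cT hT Uo Ucov Usep.
split; first exact: F_lindelof.
have oG0 : forall W, (good `|` [set ~` D0]) W -> open W.
  by move=> W [[]|->] //; rewrite openC.
have covG0 : ~` X `<=` \bigcup_(W in good `|` [set ~` D0]) W.
  move=> y ny; have [Dy|nDy] := pselect (D0 y); last by exists (~` D0) => //; right.
  have [Ob gO Oy] := FO y (conj Dy ny); by exists Ob => //; left.
have [Op [OpG [cOp covOp]]] := YL _ oG0 covG0.
apply: (@F_ps T cT hT X U Uo Ucov Usep D0 Op cD0 cOp).
- by move=> Ob /OpG [[]|->] //; rewrite openC.
- by move=> Ob /OpG [[_ lO]|->]; [right|left].
- by move=> y [_ ny]; exact: covOp.
Qed.
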